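(* (1) Let $\mathcal K$ be a class of algebras of the same type $F$. Then $\mathsf V(\mathsf D(\mathcal K))\subseteq\mathsf V(\mathcal K)_\tau$. (2) Let $\mathcal V$ be any variety of algebras of type $F$. Then $\mathcal V_\tau=\mathsf{ISD}(\mathcal V)$.
   Context: A state-morphism on an algebra $\mathbf A$ of type $F$ is an endomorphism $\tau$ of $\mathbf A$ with $\tau\circ\tau=\tau$; $(\mathbf A,\tau)$ is a state-morphism algebra, an algebra of type $F$ extended by one unary operation. For a variety $\mathcal V$ of type $F$, $\mathcal V_\tau$ is the class (a variety) of all state-morphism algebras $(\mathbf A,\tau)$ with $\mathbf A\in\mathcal V$. For an algebra $\mathbf B$ of type $F$, $D(\mathbf B)=(\mathbf B\times\mathbf B,\tau_B)$ with $\tau_B(x,y)=(x,x)$, and $\mathsf D(\mathcal K)=\{D(\mathbf B):\mathbf B\in\mathcal K\}$. $\mathsf I,\mathsf S,\mathsf V$ denote closure under isomorphic images, subalgebras, and the generated variety, respectively. *)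

(* Defs.v *)
From mathcomp Require Import all_boot.
Set Implicit Arguments. Unset Strict Implicit. Unset Printing Implicit Defensive.

Record signature := Signature { op_sym : Type; arity : op_sym -> nat }.

Record algebra (F : signature) := Algebra {
  carrier :> Type;
  interp : forall f : op_sym F, ('I_(arity f) -> carrier) -> carrier }.

Definition class (F : signature) := algebra F -> Prop.

Definition is_hom (F : signature) (A B : algebra F) (h : A -> B) : Prop :=
  forall (f : op_sym F) (args : 'I_(arity f) -> A),
    h (@interp _ A f args) = @interp _ B f (fun i => h (args i)).

Definition Hop F (K : class F) : class F := fun B =>
  exists A, K A /\ exists h : A -> B, is_hom h /\ (forall y, exists x, h x = y).

Definition subuniverse F (A : algebra F) (P : A -> Prop) : Prop :=
  forall f (args : 'I_(arity f) -> A), (forall i, P (args i)) -> P (@interp _ A f args).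

Definition subalgebra F (A : algebra F) (P : A -> Prop) (HP : subuniverse P)
  : algebra F :=
  @Algebra F {x : A | P x}
    (fun f args => exist P (@interp _ A f (fun i => proj1_sig (args i)))
                         (HP f _ (fun i => proj2_sig (args i)))).

Definition Sop F (K : class F) : class F := fun B =>
  exists A, K A /\ exists (P : A -> Prop) (HP : subuniverse P), B = subalgebra HP.

Definition Iop F (K : class F) : class F := fun B =>
  exists A, K A /\ exists h : A -> B, is_hom h /\ bijective h.

Definition prod_alg F (I : Type) (A : I -> algebra F) : algebra F :=
  @Algebra F (forall i, A i) (fun f args => fun i => @interp _ (A i) f (fun j => args j i)).

Definition Pop F (K : class F) : class F := fun B =>
  exists (I : Type) (A : I -> algebra F), (forall i, K (A i)) /\ B = prod_alg A.

Definition subclass F (K L : class F) : Prop := forall A, K A -> L A.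

Definition variety F (V : class F) : Prop :=
  subclass (Hop V) V /\ subclass (Sop V) V /\ subclass (Pop V) V.

Definition Vgen F (K : class F) : class F := fun B =>
  forall W : class F, variety W -> subclass K W -> W B.

Definition ext_sig (F : signature) : signature :=
  @Signature (option (op_sym F))
    (fun o => match o with Some f => arity f | None => 1 end).

Definition reduct F (A : algebra (ext_sig F)) : algebra F :=
  @Algebra F (carrier A) (fun f args => @interp _ A (Some f) args).

Definition unop F (A : algebra (ext_sig F)) (x : A) : A :=
  @interp _ A None (fun _ => x).

Definition state_morphism F (A : algebra F) (tau : A -> A) : Prop :=
  is_hom tau /\ (forall x, tau (tau x) = tau x).

Definition Vtau F (V : class F) : class (ext_sig F) := fun A =>
  V (reduct A) /\ state_morphism (@unop F A).

Definition Dalg F (B : algebra F) : algebra (ext_sig F) :=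
  @Algebra (ext_sig F) (B * B)%type
    (fun o => match o return ('I_(arity (s := ext_sig F) o) -> (B * B)%type) -> (B * B)%type with
     | Some f => fun args => (@interp _ B f (fun i => (args i).1),
                              @interp _ B f (fun i => (args i).2))
     | None => fun args => ((args ord0).1, (args ord0).1)
     end).

Definition Dop F (K : class F) : class (ext_sig F) := fun C =>
  exists B, K B /\ C = Dalg B.

Definition class_eq F (K L : class F) : Prop := forall A, K A <-> L A.

(* Main.v *)
Require Import Defs.
From mathcomp Require Import all_boot.
From Stdlib Require Import FunctionalExtensionality ProofIrrelevance IndefiniteDescription.
Set Implicit Arguments. Unset Strict Implicit. Unset Printing Implicit Defensive.

Lemma I1_const (T : Type) (g : 'I_1 -> T) : g = fun _ => g ord0.
Proof.
apply: functional_extensionality => i; congr g; apply: val_inj.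
by case: i => [[|m] Hm].
Qed.

Lemma sig_eq (T : Type) (P : T -> Prop) (x y : {a | P a}) :
  proj1_sig x = proj1_sig y -> x = y.
Proof.
case: x => a Ha; case: y => b Hb /= E; subst b.
by rewrite (proof_irrelevance _ Ha Hb).
Qed.

Lemma sm_of F (A : algebra (ext_sig F)) :
  (forall (f : op_sym F) (args : 'I_(arity f) -> A),
     @unop _ A (@interp _ A (Some f) args) = @interp _ A (Some f) (fun i => @unop _ A (args i))) ->
  is_hom (@unop _ A).
Proof.
move=> H [f|] args; first exact: H.
rewrite (I1_const args) /=. by [].
Qed.

Lemma hu F (A B : algebra (ext_sig F)) (h : A -> B) :
  is_hom h -> forall x, @unop _ B (h x) = h (@unop _ A x).
Proof. by move=> hh x; rewrite /unop (hh None). Qed.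

Lemma Vtau_variety F (V : class F) : variety V -> variety (Vtau V).
Proof.
case=> VH [VS VP]; split; [|split].
- move=> B [A [[VA [smA idA]] [h [hh hs]]]].
  have hu' := hu hh.
  split.
    apply: VH; exists (reduct A); split => //; exists h; split => //.
    by move=> f args; apply: (hh (Some f)).
  split.
    apply: sm_of => f args.
    pose g := fun i => proj1_sig (constructive_indefinite_description _ (hs (args i))).
    have -> : args = fun i => h (g i).
      apply: functional_extensionality => i.
      by rewrite /g; case: (constructive_indefinite_description _ _).
    rewrite -(hh (Some f)) hu' (smA (Some f)) (hh (Some f)).
    congr (@interp _ B (Some f)); apply: functional_extensionality => i.
    by rewrite hu'.
  move=> y; case: (hs y) => x <-.
  by rewrite !hu' idA.
- move=> B [A [[VA [smA idA]] [P [HP ->]]]].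
  split.
    apply: VS; exists (reduct A); split => //.
    by exists P, (fun f args H => HP (Some f) args H).
  split.
    apply: sm_of => f args; apply: sig_eq => /=.
    exact: (smA (Some f)).
  by move=> x; apply: sig_eq => /=; apply: idA.
- move=> B [I [A [HA ->]]].
  split.
    apply: VP; exists I, (fun i => reduct (A i)); split => //.
    by move=> i; case: (HA i).
  split.
    apply: sm_of => f args; apply: functional_extensionality_dep => i /=.
    by case: (HA i) => _ [sm _]; apply: (sm (Some f)).
  move=> x; apply: functional_extensionality_dep => i.
  by case: (HA i) => _ [_ id]; apply: id.
Qed.

Lemma Dop_Vtau F (V : class F) : variety V -> subclass (Dop V) (Vtau V).
Proof.
case=> VH [VS VP] C [B [VB ->]].
split.
  apply: VH; exists (prod_alg (fun _ : bool => B)); split.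
    by apply: VP; exists bool, (fun _ => B).
  exists (fun p => (p true, p false)); split => // [[x y]].
  by exists (fun b => if b then x else y).
split => //.
by apply: sm_of.
Qed.

Lemma Vgen_variety F (K : class F) : variety (Vgen K).
Proof.
split; [|split].
- move=> B [A [VA [h [hh hs]]]] W hW sub.
  case: (hW) => WH _; apply: WH; exists A; split; last by exists h.
  by apply: VA.
- move=> B [A [VA [P [HP ->]]]] W hW sub.
  case: (hW) => _ [WS _]; apply: WS; exists A; split; last by exists P, HP.
  by apply: VA.
- move=> B [I [A [VA ->]]] W hW sub.
  case: (hW) => _ [_ WP]; apply: WP; exists I, A; split => // i.
  by apply: VA.
Qed.

Theorem lemma4p1 :
  (forall (F : signature) (K : class F),
      subclass (Vgen (Dop K)) (Vtau (Vgen K))) /\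
  (forall (F : signature) (V : class F),
      variety V -> class_eq (Vtau V) (Iop (Sop (Dop V)))).
Proof.
split.
  move=> F K A HA; apply: HA.
    exact: Vtau_variety (Vgen_variety K).
  move=> C [B [KB ->]]; apply: (Dop_Vtau (Vgen_variety K)).
  by exists B; split => // W _ sub; apply: sub.
move=> F V HV A; split.
- move=> [VA [smA idA]].
  pose D := Dalg (reduct A).
  pose P := fun p : D => p = (@unop _ A p.2, p.2).
  have HP : subuniverse P.
    case=> [f|] args H.
      rewrite /P /=.
      rewrite (smA (Some f)); congr pair; congr (@interp _ A (Some f)).
      apply: functional_extensionality => i.
      by have := H i; case: (args i) => a b /= [].
    rewrite /P /=.
    have := H ord0; case: (args ord0) => a b /= [->].
    by rewrite idA.
  exists (subalgebra HP); split.
    exists D; split; last by exists P, HP.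
    by exists (reduct A).
  exists (fun c => (proj1_sig c).2); split.
    case=> [f|] args => //=.
    transitivity (@interp _ A None (fun _ => (proj1_sig (args ord0)).2)); last first.
      by congr (@interp _ A None); exact: (esym (I1_const (fun i : 'I_1 => (proj1_sig (args i)).2))).
    by case: (args ord0) => [[a b]] /= [->].
  exists (fun x => exist P (@unop _ A x, x) erefl) => //.
  case=> [[a b]] Hp; apply: sig_eq => /=.
  by rewrite /P /= in Hp; rewrite Hp.
- move=> [C [[D [[B [VB ->]] [P [HP ->]]]] [h [hh [g _ hg]]]]].
  have [VtH [VtS _]] := Vtau_variety HV.
  apply: VtH; exists (subalgebra HP); split.
    apply: VtS; exists (Dalg B); split; last by exists P, HP.
    by apply: (Dop_Vtau HV); exists B.
  exists h; split => // y; exists (g y); exact: hg.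
Qed.
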